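(* Let $V$ be a set and $o$ a partial 3-order on $V$ with the $(4,3)$ property. Then there are no distinct $A,B,C,D\in V$ with $o(ABD)=o(BCD)=o(CAD)=1$.
   Context: A partial orientation on $V$ is a map $o$ from ordered triples of distinct elements of $V$ to $\{+1,0,-1\}$ with $o(uvw)=o(wuv)=o(vwu)=-o(uwv)=-o(vuw)=-o(wvu)$. It is a partial 3-order if it satisfies the interiority condition: for all distinct $a,b,c,d$, $o(abd)=o(bcd)=o(cad)=1$ implies $o(abc)=1$. It has the $(4,3)$ property if among any four distinct elements of $V$ there are three, $x,y,z$, with $o(xyz)=0$. *)

(* Defs.v *)
From Stdlib Require Import ZArith.
Open Scope Z_scope.

(* We represent it as a
   total function V -> V -> V -> Z; its values on non-distinct triples are
   irrelevant (all conditions only constrain distinct triples). *)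
Definition distinct3 {V : Type} (u v w : V) : Prop :=
  u <> v /\ v <> w /\ u <> w.

Definition partial_orientation {V : Type} (o : V -> V -> V -> Z) : Prop :=
  forall u v w : V, distinct3 u v w ->
    (o u v w = 1 \/ o u v w = 0 \/ o u v w = -1) /\
    o u v w = o w u v /\ o u v w = o v w u /\
    o u v w = - o u w v /\ o u v w = - o v u w /\ o u v w = - o w v u.

Definition interiority {V : Type} (o : V -> V -> V -> Z) : Prop :=
  forall a b c d : V,
    a <> b -> a <> c -> a <> d -> b <> c -> b <> d -> c <> d ->
    o a b d = 1 -> o b c d = 1 -> o c a d = 1 -> o a b c = 1.

Definition partial_3order {V : Type} (o : V -> V -> V -> Z) : Prop :=
  partial_orientation o /\ interiority o.

Definition prop43 {V : Type} (o : V -> V -> V -> Z) : Prop :=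
  forall a b c d : V,
    a <> b -> a <> c -> a <> d -> b <> c -> b <> d -> c <> d ->
    exists x y z : V,
      (x = a \/ x = b \/ x = c \/ x = d) /\
      (y = a \/ y = b \/ y = c \/ y = d) /\
      (z = a \/ z = b \/ z = c \/ z = d) /\
      distinct3 x y z /\ o x y z = 0.

(* Main.v *)
Require Import Defs.
From Stdlib Require Import ZArith Lia.
Open Scope Z_scope.

Theorem lemma5 (V : Type) (o : V -> V -> V -> Z) :
  partial_3order o -> prop43 o ->
  ~ (exists A B C D : V,
       A <> B /\ A <> C /\ A <> D /\ B <> C /\ B <> D /\ C <> D /\
       o A B D = 1 /\ o B C D = 1 /\ o C A D = 1).
Proof.
  intros [Hor Hint] H43 [A [B [C [D [hAB [hAC [hAD [hBC [hBD [hCD [h1 [h2 h3]]]]]]]]]]]].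
  assert (h4 : o A B C = 1) by (apply (Hint A B C D); auto).
  assert (d1 : distinct3 A B C) by (repeat split; auto).
  assert (d2 : distinct3 A B D) by (repeat split; auto).
  assert (d3 : distinct3 B C D) by (repeat split; auto).
  assert (d4 : distinct3 C A D) by (repeat split; auto).
  pose proof (Hor _ _ _ d1) as e1. pose proof (Hor _ _ _ d2) as e2.
  pose proof (Hor _ _ _ d3) as e3. pose proof (Hor _ _ _ d4) as e4.
  destruct (H43 A B C D hAB hAC hAD hBC hBD hCD) as [x [y [z [Hx [Hy [Hz [[n1 [n2 n3]] H0]]]]]]].
  destruct Hx as [ -> | [ -> | [ -> | -> ]]]; destruct Hy as [ -> | [ -> | [ -> | -> ]]];
  destruct Hz as [ -> | [ -> | [ -> | -> ]]];
  try congruence; lia.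
Qed.
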